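(* Let $\{(G_n,\Psi_n,\varphi^L_n,\varphi^U_n)\}_{n\ge0}$ be an $\mathcal{F}$-system (with $\varphi^U_n>0$) satisfying Condition $\Gamma$, with induced Cantor system $(X,H_X)$, and assume its associated fence $\mathbf{F}_\Phi$ is a Scissorhand fence. Then there exists a unique continuous surjection $T:\mathbf{F}_\Phi\to\mathbf{F}_\Phi$ having $H_X$ as a factor (i.e. $\pi\circ T=H_X\circ\pi$, where $\pi(x,t)=x$) and satisfying $T(x,\varphi^U(x))=(H_X(x),\varphi^U(H_X(x)))$ for all $x\in X$. Moreover: (1) if $H_X$ is a homeomorphism, then $T$ is a homeomorphism of $\mathbf{F}_\Phi$; (2) if $s$ and $H_X$ are both Lipschitz, then so is $T$; (3) if $s$ and $1/s$ are both Lipschitz and $H_X$ is bi-Lipschitz, then $T$ is bi-Lipschitz; (4) if $s\equiv1$ and $H_X$ is an isometry, then $T$ is an isometry.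
   Context: An $\mathcal{F}$-system consists of: finite directed graphs $G_n$ ($n\ge0$), each vertex having at least one outgoing and one incoming edge; surjective maps $\Psi_n:G_{n+1}\to G_n$ sending edges to edges; such that (i) for each $n$ and $v\in G_n$ there are $m>n$ and distinct $v',v''\in G_{m+1}$ with $\Psi_n\circ\cdots\circ\Psi_m(v')=\Psi_n\circ\cdots\circ\Psi_m(v'')=v$; (ii) for every $m$ there is $n>m$ such that for every $g\in G_n$ the set $\{\Psi_m\circ\cdots\circ\Psi_{n-1}(g'):\overrightarrow{gg'}\in G_n\}$ has exactly one element; and maps $\varphi^L_n,\varphi^U_n:G_n\to[0,1]$ with $\varphi^L_n\le\varphi^U_n$, $\varphi^U_{n+1}(v')\le\varphi^U_n(\Psi_n(v'))$, $\varphi^L_{n+1}(v')\ge\varphi^L_n(\Psi_n(v'))$, and such that for every $g\in G_n$ there is $g'\in G_{n+1}$ with $\Psi_n(g')=g$, $\varphi^L_{n+1}(g')=\varphi^L_n(g)$, $\varphi^U_{n+1}(g')=\varphi^U_n(g)$. $X=\{x\in\prod_n G_n: x(n)=\Psi_n(x(n+1))\ \forall n\}$ with metric $d(x,y)=2^{-n}$, $n$ the least index with $x(n)\ne y(n)$; $H_X:X\to X$ is the continuous surjection whose graph is $\{(x,y)\in X^2:\overrightarrow{x(n)y(n)}\in G_n\ \forall n\}$. $\varphi^U(x)=\lim_n\varphi^U_n(x(n))$, $\varphi^L(x)=\lim_n\varphi^L_n(x(n))$, $\Phi=(\varphi^L,\varphi^U)$ and $\mathbf{F}_\Phi=\{(x,t)\in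 X\times[0,1]:\varphi^L(x)\le t\le\varphi^U(x)\}$, with the maximum metric of $X\times[0,1]$. It is a Scissorhand fence if the graph of $\varphi^U$ is dense in $\mathbf{F}_\Phi$ and $\{x:\varphi^L(x)\ne\varphi^U(x)\}$ is dense in $X$. For $u,v\in G_n$, $s_n(u,v)=\varphi^U_n(v)/\varphi^U_n(u)$; for an edge $\overrightarrow{uv}\in G_n$, $\Gamma_n(\overrightarrow{uv})=\max\{|s_n(v,u)-s_{n+1}(v',u')|,|s_n(u,v)-s_{n+1}(u',v')| : \overrightarrow{u'v'}\in G_{n+1},\Psi_n(u')=u,\Psi_n(v')=v\}$, $\Gamma_n=\max\Gamma_n(\overrightarrow{uv})$; Condition $\Gamma$: $\sum_n\Gamma_n<1$. Finally $s:X\to\mathbb{R}$, $s(x)=\lim_n s_n(x(n),H_X(x)(n))$. *)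

(* Defs.v *)
From Stdlib Require Import Reals ClassicalEpsilon.
From mathcomp Require Import all_boot.


Local Open Scope R_scope.

Record FData := {
  V : nat -> finType;
  E : forall n, rel (V n);
  Psi : forall n, V n.+1 -> V n;
  phiL : forall n, V n -> R;
  phiU : forall n, V n -> R }.

Section FSys.
Variable Fs : FData.

Fixpoint proj (n d : nat) : V Fs (Nat.add d n) -> V Fs n :=
  match d return V Fs (Nat.add d n) -> V Fs n with
  | O => fun x => x
  | S d' => fun x => proj n d' (Psi Fs (Nat.add d' n) x)
  end.

Definition is_FSystem : Prop :=
  (forall n (v : V Fs n), exists w, E Fs n v w) /\
  (forall n (v : V Fs n), exists u, E Fs n u v) /\
  (forall n (v : V Fs n), exists v', Psi Fs n v' = v) /\
  (forall n (u v : V Fs n.+1), E Fs n.+1 u v -> E Fs n (Psi Fs n u) (Psi Fs n v)) /\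
  (forall n (u v : V Fs n), E Fs n u v ->
      exists u' v', [/\ E Fs n.+1 u' v', Psi Fs n u' = u & Psi Fs n v' = v]) /\
  (* condition (i): m > n, i.e. G_{m+1} = G_{n+d} with d = m+1-n >= 2 *)
  (forall n (v : V Fs n), exists d, (2 <= d)%nat /\
      exists v' v'' : V Fs (Nat.add d n), [/\ v' <> v'', proj n d v' = v & proj n d v'' = v]) /\
  (* condition (ii): n = m + d with d >= 1 *)
  (forall m, exists d, (1 <= d)%nat /\
      forall g : V Fs (Nat.add d m),
        exists! w : V Fs m, exists g', E Fs (Nat.add d m) g g' /\ proj m d g' = w) /\
  (forall n (v : V Fs n), 0 <= phiL Fs n v /\ phiL Fs n v <= phiU Fs n v /\ phiU Fs n v <= 1) /\
  (forall n (v : V Fs n.+1), phiU Fs n.+1 v <= phiU Fs n (Psi Fs n v)) /\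
  (forall n (v : V Fs n.+1), phiL Fs n (Psi Fs n v) <= phiL Fs n.+1 v) /\
  (forall n (g : V Fs n), exists g', [/\ Psi Fs n g' = g,
      phiL Fs n.+1 g' = phiL Fs n g & phiU Fs n.+1 g' = phiU Fs n g]).

Definition X : Type := {x : forall n, V Fs n | forall n, x n = Psi Fs n (x n.+1)}.

Definition pt (x : X) (n : nat) : V Fs n := proj1_sig x n.

Definition dX (x y : X) : R :=
  match excluded_middle_informative (exists n, pt x n != pt y n) with
  | left H => (/ 2) ^ (ex_minn H)
  | right _ => 0
  end.

Definition HXrel (x y : X) : Prop := forall n, E Fs n (pt x n) (pt y n).

Definition HX (x : X) : X :=
  match excluded_middle_informative (exists y, HXrel x y) with
  | left H => proj1_sig (constructive_indefinite_description _ H)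
  | right _ => x
  end.

(* limit of a real sequence (0 if it does not converge) *)
Definition lim_seq (u : nat -> R) : R :=
  match excluded_middle_informative (exists l, Un_cv u l) with
  | left H => proj1_sig (constructive_indefinite_description _ H)
  | right _ => 0
  end.

Definition phiUX (x : X) : R := lim_seq (fun n => phiU Fs n (pt x n)).
Definition phiLX (x : X) : R := lim_seq (fun n => phiL Fs n (pt x n)).

Definition sn (n : nat) (u v : V Fs n) : R := phiU Fs n v / phiU Fs n u.

Definition Gamma_edge (n : nat) (u v : V Fs n) : R :=
  \big[Rmax/0]_(p : V Fs n.+1 * V Fs n.+1 |
                  [&& E Fs n.+1 p.1 p.2, Psi Fs n p.1 == u & Psi Fs n p.2 == v])
     Rmax (Rabs (sn n v u - sn n.+1 p.2 p.1)) (Rabs (sn n u v - sn n.+1 p.1 p.2)).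

Definition Gamma (n : nat) : R :=
  \big[Rmax/0]_(p : V Fs n * V Fs n | E Fs n p.1 p.2) Gamma_edge n p.1 p.2.

Definition condition_Gamma : Prop :=
  exists l, infinite_sum Gamma l /\ l < 1.

Definition sX (x : X) : R := lim_seq (fun n => sn n (pt x n) (pt (HX x) n)).

Definition dXR (p q : X * R) : R := Rmax (dX p.1 q.1) (Rabs (p.2 - q.2)).

Definition Fence : Type := {p : X * R | phiLX p.1 <= p.2 <= phiUX p.1}.

Definition dF (p q : Fence) : R := dXR (proj1_sig p) (proj1_sig q).

Definition Scissorhand : Prop :=
  (forall (p : Fence) eps, 0 < eps ->
      exists x : X, dXR (proj1_sig p) (x, phiUX x) < eps) /\
  (forall (x : X) eps, 0 < eps -> exists y : X, dX x y < eps /\ phiLX y <> phiUX y).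

End FSys.

Section Metric.
Context {A B : Type}.
Variables (dA : A -> A -> R) (dB : B -> B -> R).

Definition mcontinuous (f : A -> B) : Prop :=
  forall a eps, 0 < eps -> exists delta, 0 < delta /\
    forall a', dA a a' < delta -> dB (f a) (f a') < eps.

Definition lipschitz (f : A -> B) : Prop :=
  exists K, forall a a', dB (f a) (f a') <= K * dA a a'.

Definition bilipschitz (f : A -> B) : Prop :=
  exists K, 0 < K /\ forall a a',
    dA a a' <= K * dB (f a) (f a') /\ dB (f a) (f a') <= K * dA a a'.

Definition isometry (f : A -> B) : Prop :=
  forall a a', dB (f a) (f a') = dA a a'.

End Metric.

Definition dR (x y : R) : R := Rabs (x - y).

Definition homeomorphism {A : Type} (dA : A -> A -> R) (f : A -> A) : Prop :=
  mcontinuous dA dA f /\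
  exists g : A -> A, [/\ (forall a, g (f a) = a), (forall a, f (g a) = a) &
                         mcontinuous dA dA g].

(* Main.v *)
Require Import Defs.
From Stdlib Require Import Reals Lra ClassicalEpsilon FunctionalExtensionality ProofIrrelevance Classical.
From mathcomp Require Import all_boot.

Local Open Scope R_scope.

Lemma half_pos n : 0 < (/2)^n.
Proof. apply pow_lt; lra. Qed.

Lemma half_le k m : (k <= m)%N -> (/2)^m <= (/2)^k.
Proof.
elim: m => [|m IH] h.
  by move: h; rewrite leqn0 => /eqP ->; lra.
move: h; rewrite leq_eqVlt => /orP [/eqP -> |h]; first lra.
have := IH h; have := half_pos m; simpl; lra.
Qed.
Arguments half_le {k m}.

Lemma half_small eps : 0 < eps -> exists n, (/2)^n < eps.
Proof.
move=> he; have [N HN] := pow_lt_1_zero (/2) ltac:(rewrite Rabs_pos_eq; lra) eps he.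
exists N; have := HN N (le_n N); rewrite Rabs_pos_eq //; apply pow_le; lra.
Qed.

Lemma pigeon (T : finType) (Rl : nat -> T -> Prop) :
  (forall D, exists d, (D <= d)%N /\ exists t, Rl d t) ->
  exists t, forall D, exists d, (D <= d)%N /\ Rl d t.
Proof.
move=> h; apply: NNPP => hn.
have h1 : forall t, exists D, forall d, (D <= d)%N -> ~ Rl d t.
  move=> t; apply: NNPP => h2; apply: hn; exists t => D.
  apply: NNPP => h3; apply: h2; exists D => d hd hr; apply: h3; exists d; split => //.
pose f t := proj1_sig (constructive_indefinite_description _ (h1 t)).
have hf : forall t d, (f t <= d)%N -> ~ Rl d t.
  move=> t; exact: (proj2_sig (constructive_indefinite_description _ (h1 t))).
have [d [hd [t ht]]] := h (\max_t f t).
apply: (hf t d) => //; apply: leq_trans hd; exact: leq_bigmax.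
Qed.

Lemma geN a b : (b <= a)%N -> (a >= b)%coq_nat.
Proof. by move/leP. Qed.
Arguments geN {a b}.

Lemma lim_seq_eq u l : Un_cv u l -> lim_seq u = l.
Proof.
move=> h; rewrite /lim_seq; case: excluded_middle_informative => H.
  apply: UL_sequence (proj2_sig (constructive_indefinite_description _ H)) h.
by case: H; exists l.
Qed.

Lemma cv_le u l c N : Un_cv u l -> (forall k, (N <= k)%N -> u k <= c) -> l <= c.
Proof.
move=> hu hc; apply: Rnot_lt_le => hlt.
have [M hM] := hu (l - c) ltac:(lra).
have h2 := hM (maxn N M) (geN (leq_maxr _ _)).
have h1 := hc (maxn N M) (leq_maxl _ _).
move: h2; rewrite /Rdist => /Rabs_def2; lra.
Qed.

Lemma cv_ge u l c N : Un_cv u l -> (forall k, (N <= k)%N -> c <= u k) -> c <= l.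
Proof.
move=> hu hc; apply: Rnot_lt_le => hlt.
have [M hM] := hu (c - l) ltac:(lra).
have h2 := hM (maxn N M) (geN (leq_maxr _ _)).
have h1 := hc (maxn N M) (leq_maxl _ _).
move: h2; rewrite /Rdist => /Rabs_def2; lra.
Qed.

Lemma dec_cv u c : (forall n, u n.+1 <= u n) -> (forall n, c <= u n) -> exists l, Un_cv u l.
Proof.
move=> hd hb; have [l hl] : {l | Un_cv u l}.
  apply: decreasing_cv => //.
  exists (- c) => x [i ->]; rewrite /opp_seq; have := hb i; lra.
by exists l.
Qed.

Lemma inc_cv u c : (forall n, u n <= u n.+1) -> (forall n, u n <= c) -> exists l, Un_cv u l.
Proof.
move=> hd hb; have [l hl] : {l | Un_cv u l}.
  apply: growing_cv => //.
  exists c => x [i ->]; exact: hb.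
by exists l.
Qed.

Lemma le_eps a b c : 0 <= c -> (forall e, 0 < e -> e <= 1 -> a <= b + e * c) -> a <= b.
Proof.
move=> hc h; apply: Rnot_lt_le => hlt.
pose e := Rmin 1 ((a - b) / (2 * (c + 1))).
have he1 : e <= 1 by apply: Rmin_l.
have he2 : e <= (a - b) / (2 * (c + 1)) by apply: Rmin_r.
have hpos : 0 < (a - b) / (2 * (c + 1)) by apply: Rdiv_lt_0_compat; lra.
have he0 : 0 < e by apply: Rmin_glb_lt; lra.
have := h e he0 he1.
have : e * c <= (a - b) / (2 * (c + 1)) * c by apply: Rmult_le_compat_r.
have : (a - b) / (2 * (c + 1)) * c < a - b.
  apply: (Rmult_lt_reg_r (2 * (c + 1))); first lra.
  field_simplify; try lra. nra.
lra.
Qed.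

Lemma bigmax_seq_ge (T : eqType) (r : seq T) (P : pred T) (F : T -> R) i :
  i \in r -> P i -> F i <= \big[Rmax/0]_(j <- r | P j) F j.
Proof.
elim: r => [//|a r IH]; rewrite in_cons => /orP [/eqP <- | hin] hp; rewrite big_cons.
  by rewrite hp; apply: Rmax_l.
case: (P a); last exact: IH.
apply: Rle_trans (IH hin hp) _; apply: Rmax_r.
Qed.

Lemma bigmax_seq_ge0 (T : eqType) (r : seq T) (P : pred T) (F : T -> R) :
  0 <= \big[Rmax/0]_(j <- r | P j) F j.
Proof.
elim: r => [|a r IH]; first by rewrite big_nil; lra.
rewrite big_cons; case: (P a) => //; apply: Rle_trans IH _; apply: Rmax_r.
Qed.

Lemma bigmax_ge (T : finType) (P : pred T) (F : T -> R) i :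
  P i -> F i <= \big[Rmax/0]_(j | P j) F j.
Proof. move=> hp; apply: bigmax_seq_ge hp; exact: mem_index_enum. Qed.

Lemma bigmax_ge0 (T : finType) (P : pred T) (F : T -> R) : 0 <= \big[Rmax/0]_(j | P j) F j.
Proof. exact: bigmax_seq_ge0. Qed.

Lemma cv_ext u v l : (forall n, u n = v n) -> Un_cv u l -> Un_cv v l.
Proof. move=> e h eps he; have [N hN] := h eps he; exists N => n hn; rewrite -e; exact: hN. Qed.

Lemma sig_ext {A : Type} {P : A -> Prop} (a b : {x | P x}) : proj1_sig a = proj1_sig b -> a = b.
Proof. destruct a as [a ha], b as [b hb]; simpl => e; subst; f_equal; apply: proof_irrelevance. Qed.

Lemma eq_eps a b : (forall e, 0 < e -> Rabs (a - b) < e) -> a = b.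
Proof.
move=> h; apply: NNPP => hne.
have hp : 0 < Rabs (a - b) by apply: Rabs_pos_lt; lra.
have := h _ hp; lra.
Qed.

Lemma div_close a b t t' eps : 0 < a -> 0 < eps -> Rabs (a - b) < Rmin (a/2) (eps*a*a/4) ->
  Rabs (t - t') < eps*a/2 -> 0 <= t' <= 1 -> Rabs (t/a - t'/b) < eps.
Proof.
move=> ha he hab htt ht'.
have hab1 := Rlt_le_trans _ _ _ hab (Rmin_l _ _).
have hab2 := Rlt_le_trans _ _ _ hab (Rmin_r _ _).
have hb : a / 2 < b by move/Rabs_def2: hab1; lra.
have hb0 : 0 < b by lra.
have hab0 : 0 < a * b by apply: Rmult_lt_0_compat.
apply: (Rmult_lt_reg_r (a * b)) => //.
rewrite -(Rabs_pos_eq (a * b)); last lra.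
rewrite -Rabs_mult.
have -> : (t / a - t' / b) * (a * b) = (t - t') * b + t' * (b - a) by field; lra.
apply: Rle_lt_trans (Rabs_triang _ _) _.
rewrite !Rabs_mult (Rabs_pos_eq b); last lra.
rewrite (Rabs_pos_eq t'); last lra.
rewrite (Rabs_minus_sym b a).
have h1 : Rabs (t - t') * b < eps * a / 2 * b by apply: Rmult_lt_compat_r.
have h2 : t' * Rabs (a - b) <= Rabs (a - b).
  have := Rabs_pos (a - b); nra.
have h3 : eps * a * a / 4 < eps * a * b / 2.
  have : 0 < eps * a by apply: Rmult_lt_0_compat.
  nra.
rewrite (Rabs_pos_eq a); last lra.
lra.
Qed.

Lemma mulabs_le k d D : 0 <= d <= D -> k * d <= Rabs k * D.
Proof.
move=> [h1 h2]; apply: Rle_trans (_ : Rabs k * d <= _).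
  apply: Rmult_le_compat_r => //; exact: Rle_abs.
apply: Rmult_le_compat_l => //; exact: Rabs_pos.
Qed.

Fixpoint lv (n d : nat) : nat := match d with 0%N => n | S d => lv n.+1 d end.

Section Sys.
Variable Fs : FData.
Local Notation XX := (X Fs).
Local Notation pt := (pt Fs).
Local Notation VV := (V Fs).
Local Notation Ps := (Psi Fs).

Lemma X_ext (x y : XX) : (forall n, pt x n = pt y n) -> x = y.
Proof.
destruct x as [x hx], y as [y hy]; rewrite /Defs.pt /= => h.
have e : x = y by apply: functional_extensionality_dep.
subst; f_equal; apply: proof_irrelevance.
Qed.

Lemma pt_Psi (x : XX) n : pt x n = Ps n (pt x n.+1).
Proof. exact: (proj2_sig x n). Qed.

Lemma agree_le (x y : XX) m n : (m <= n)%N -> pt x n = pt y n -> pt x m = pt y m.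
Proof.
elim: n => [|n IH] h e.
  by move: h; rewrite leqn0 => /eqP ->.
move: h; rewrite leq_eqVlt => /orP [/eqP -> //|h].
apply: IH => //; by rewrite pt_Psi e -pt_Psi.
Qed.
Arguments agree_le {x y m n}.

Lemma dX_agree (x y : XX) n : pt x n = pt y n -> dX Fs x y <= (/2)^n.+1.
Proof.
move=> e; rewrite /dX; case: excluded_middle_informative => [H|H]; last first.
  apply: pow_le; lra.
case: ex_minnP => m hm hmin; apply: half_le.
rewrite ltnNge; apply/negP => hmn.
by move: hm; rewrite (agree_le hmn e) eqxx.
Qed.

Lemma dX_lt_agree (x y : XX) n : dX Fs x y < (/2)^n -> pt x n = pt y n.
Proof.
move=> hd; case: (eqVneq (pt x n) (pt y n)) => // hne; exfalso.
move: hd; rewrite /dX; case: excluded_middle_informative => [H|H]; last first.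
  by case: H; exists n.
case: ex_minnP => m hm hmin.
have := half_le (hmin n hne); lra.
Qed.

Lemma dX_ge0 (x y : XX) : 0 <= dX Fs x y.
Proof. rewrite /dX; case: excluded_middle_informative => H; [apply: pow_le|]; lra. Qed.

Lemma dX_le1 (x y : XX) : dX Fs x y <= 1.
Proof.
rewrite /dX; case: excluded_middle_informative => H; last lra.
have := half_le (leq0n (ex_minn H)); simpl; lra.
Qed.

Lemma dX_small (x y : XX) n : dX Fs x y < (/2)^n -> forall m, (m <= n)%N -> pt x m = pt y m.
Proof. move=> h m hm; apply: agree_le hm _; exact: dX_lt_agree. Qed.


Lemma build_path (Q : forall n, VV n -> Prop) : (exists v, Q 0%N v) ->
  (forall n v, Q n v -> exists v', Ps n v' = v /\ Q n.+1 v') ->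
  exists x : XX, forall n, Q n (pt x n).
Proof.
move=> h0 hs.
pose c0 := constructive_indefinite_description _ h0.
pose st n (p : {v | Q n v}) := constructive_indefinite_description _ (hs n (proj1_sig p) (proj2_sig p)).
pose bp := fix bp n : {v : VV n | Q n v} := match n return {v : VV n | Q n v} with
   | 0%N => exist _ (proj1_sig c0) (proj2_sig c0)
   | S k => let e := st k (bp k) in exist _ (proj1_sig e) (proj2 (proj2_sig e)) end.
have hb : forall n, proj1_sig (bp n) = Ps n (proj1_sig (bp n.+1)).
  move=> n; exact: (esym (proj1 (proj2_sig (st n (bp n))))).
exists (exist _ (fun n => proj1_sig (bp n)) hb) => n; exact: (proj2_sig (bp n)).
Qed.

Fixpoint prj (n d : nat) : VV (lv n d) -> VV n :=
  match d return VV (lv n d) -> VV n with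
  | 0%N => fun w => w
  | S d => fun w => Ps n (prj n.+1 d w) end.

Lemma prj_down (P : forall n, VV n -> Prop) (hP : forall n v, P n.+1 v -> P n (Ps n v)) d :
  forall n w, P (lv n d) w -> P n (prj n d w).
Proof. elim: d => [|d IH] n w h //=; apply: hP; exact: IH. Qed.

Lemma konig (P : forall n, VV n -> Prop) : (forall n, exists v, P n v) ->
  (forall n v, P n.+1 v -> P n (Ps n v)) -> exists x : XX, forall n, P n (pt x n).
Proof.
move=> hne hP.
pose Q n v := forall D, exists d, (D <= d)%N /\ exists w : VV (lv n d), prj n d w = v /\ P (lv n d) w.
have [x hx] : exists x : XX, forall n, Q n (pt x n).
  apply: build_path.
    pose Rl := fun d (v : VV 0) => exists w : VV (lv 0 d), prj 0 d w = v /\ P (lv 0 d) w.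
    have [t ht] : exists t, forall D, exists d, (D <= d)%N /\ Rl d t.
      apply: pigeon => D; exists D; split=> //; have [w hw] := hne (lv 0 D).
      by exists (prj 0 D w), w.
    by exists t.
  move=> n v hq.
  pose Rl := fun d v' => Ps n v' = v /\
      exists w : VV (lv n.+1 d), prj n.+1 d w = v' /\ P (lv n.+1 d) w.
  have [t ht] : exists t, forall D, exists d, (D <= d)%N /\ Rl d t.
    apply: pigeon => D.
    have [[|d] [hd [w [hw1 hw2]]]] := hq D.+1; first by [].
    exists d; split=> //; exists (prj n.+1 d w); split=> //; by exists w.
  exists t; split; first by have [d [_ [? _]]] := ht 0%N.
  move=> D; have [d [hd [_ hw]]] := ht D; by exists d.
exists x => n; have [d [_ [w [<- hw]]]] := hx n 0%N; exact: prj_down hP d n w hw.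
Qed.


Lemma pt_proj (x : XX) m d : proj Fs m d (pt x (Nat.add d m)) = pt x m.
Proof. elim: d => [|d IH] //=; by rewrite -pt_Psi. Qed.

Hypothesis hout : forall n (v : VV n), exists w, E Fs n v w.
Hypothesis hin : forall n (v : VV n), exists u, E Fs n u v.
Hypothesis hedge : forall n (u v : VV n.+1), E Fs n.+1 u v -> E Fs n (Ps n u) (Ps n v).
Hypothesis hii : forall m, exists d, (1 <= d)%N /\
      forall g : VV (Nat.add d m),
        exists! w : VV m, exists g', E Fs (Nat.add d m) g g' /\ proj Fs m d g' = w.

Lemma HXrel_ex (x : XX) : exists y, HXrel Fs x y.
Proof.
have [y hy] : exists y : XX, forall n, E Fs n (pt x n) (pt y n).
  apply: (konig (fun n v => E Fs n (pt x n) v)) => [n|n v h]; first exact: hout.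
  rewrite pt_Psi; exact: hedge.
by exists y.
Qed.

Lemma HXrel_uniq (x y y' : XX) : HXrel Fs x y -> HXrel Fs x y' -> y = y'.
Proof.
move=> h1 h2; apply: X_ext => m.
have [d [_ h]] := hii m.
have [w [_ hu]] := h (pt x (Nat.add d m)).
rewrite -(hu (pt y m)); last by exists (pt y (Nat.add d m)); split; [exact: h1| exact: pt_proj].
rewrite -(hu (pt y' m)) //; by exists (pt y' (Nat.add d m)); split; [exact: h2| exact: pt_proj].
Qed.

Lemma HX_spec (x : XX) : HXrel Fs x (HX Fs x).
Proof.
rewrite /HX; case: excluded_middle_informative => H.
  exact: (proj2_sig (constructive_indefinite_description _ H)).
by case: H; apply: HXrel_ex.
Qed.

Lemma HX_cont m : exists N, forall x y : XX, pt x N = pt y N -> pt (HX Fs x) m = pt (HX Fs y) m.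
Proof.
have [d [_ h]] := hii m; exists (Nat.add d m) => x y e.
have [w [_ hu]] := h (pt x (Nat.add d m)).
rewrite -(hu (pt (HX Fs x) m)); last first.
  by exists (pt (HX Fs x) (Nat.add d m)); split; [exact: HX_spec| exact: pt_proj].
rewrite -(hu (pt (HX Fs y) m)) //.
by exists (pt (HX Fs y) (Nat.add d m)); split; [rewrite e; exact: HX_spec| exact: pt_proj].
Qed.

Lemma HX_surj (y : XX) : exists x, HX Fs x = y.
Proof.
have [x hx] : exists x : XX, forall n, E Fs n (pt x n) (pt y n).
  apply: (konig (fun n v => E Fs n v (pt y n))) => [n|n v h]; first exact: hin.
  rewrite [pt y n]pt_Psi; exact: hedge.
exists x; apply: HXrel_uniq (HX_spec x) _; exact: hx.
Qed.


Hypothesis hphi : forall n (v : VV n), 0 <= phiL Fs n v /\ phiL Fs n v <= phiU Fs n v /\ phiU Fs n v <= 1.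
Hypothesis hU : forall n (v : VV n.+1), phiU Fs n.+1 v <= phiU Fs n (Ps n v).
Hypothesis hL : forall n (v : VV n.+1), phiL Fs n (Ps n v) <= phiL Fs n.+1 v.

Definition uU (x : XX) n := phiU Fs n (pt x n).
Definition uL (x : XX) n := phiL Fs n (pt x n).

Lemma uU_mono x n k : (n <= k)%N -> uU x k <= uU x n.
Proof.
elim: k => [|k IH] h.
  by move: h; rewrite leqn0 => /eqP ->; lra.
move: h; rewrite leq_eqVlt => /orP [/eqP -> |h]; first lra.
have := IH h; have := hU k (pt x k.+1); rewrite /uU -pt_Psi; lra.
Qed.

Lemma uL_mono x n k : (n <= k)%N -> uL x n <= uL x k.
Proof.
elim: k => [|k IH] h.
  by move: h; rewrite leqn0 => /eqP ->; lra.
move: h; rewrite leq_eqVlt => /orP [/eqP -> |h]; first lra.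
have := IH h; have := hL k (pt x k.+1); rewrite /uL -pt_Psi; lra.
Qed.

Lemma phiUX_cv x : Un_cv (uU x) (phiUX Fs x).
Proof.
have [l hl] : exists l, Un_cv (uU x) l.
  apply: (dec_cv _ 0) => n; first by have := uU_mono x _ _ (leqnSn n).
  have := hphi _ (pt x n); rewrite /uU; lra.
have e : phiUX Fs x = l := lim_seq_eq (uU x) l hl. by rewrite e.
Qed.

Lemma phiLX_cv x : Un_cv (uL x) (phiLX Fs x).
Proof.
have [l hl] : exists l, Un_cv (uL x) l.
  apply: (inc_cv _ 1) => n; first by have := uL_mono x _ _ (leqnSn n).
  have := hphi _ (pt x n); rewrite /uL; lra.
have e : phiLX Fs x = l := lim_seq_eq (uL x) l hl. by rewrite e.
Qed.

Lemma phiUX_le x n : phiUX Fs x <= uU x n.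
Proof. apply: (cv_le _ _ _ n (phiUX_cv x)) => k hk; exact: uU_mono. Qed.

Lemma phiLX_ge x n : uL x n <= phiLX Fs x.
Proof. apply: (cv_ge _ _ _ n (phiLX_cv x)) => k hk; exact: uL_mono. Qed.

Lemma phiUX_ge0 x : 0 <= phiUX Fs x.
Proof. apply: (cv_ge _ _ _ 0 (phiUX_cv x)) => k _; have := hphi _ (pt x k); rewrite /uU; lra. Qed.

Lemma phiLX_le1 x : phiLX Fs x <= 1.
Proof. apply: (cv_le _ _ _ 0 (phiLX_cv x)) => k _; have := hphi _ (pt x k); rewrite /uL; lra. Qed.

Lemma phiLX_ge0 x : 0 <= phiLX Fs x.
Proof. have := phiLX_ge x 0; have := hphi _ (pt x 0); rewrite /uL; lra. Qed.

Lemma phiUX_le1 x : phiUX Fs x <= 1.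
Proof. have := phiUX_le x 0; have := hphi _ (pt x 0); rewrite /uU; lra. Qed.

Lemma phiLU x : phiLX Fs x <= phiUX Fs x.
Proof.
apply: (cv_ge _ _ _ 0 (phiUX_cv x)) => k _.
apply: (cv_le _ _ _ k (phiLX_cv x)) => j hj.
have := uU_mono x _ _ hj; have := hphi _ (pt x j); rewrite /uU /uL; lra.
Qed.


Hypothesis hpos : forall n (v : VV n), 0 < phiU Fs n v.
Variable lG : R.
Hypothesis hGs : infinite_sum (Gamma Fs) lG.
Hypothesis hGl : lG < 1.

Lemma Gamma_ge0 n : 0 <= Gamma Fs n.
Proof. exact: bigmax_ge0. Qed.

Lemma Gamma_step n (u v u' v' : VV n.+1) (u0 v0 : VV n) : E Fs n u0 v0 -> E Fs n.+1 u' v' ->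
  Ps n u' = u0 -> Ps n v' = v0 ->
  Rabs (sn Fs n v0 u0 - sn Fs n.+1 v' u') <= Gamma Fs n /\
  Rabs (sn Fs n u0 v0 - sn Fs n.+1 u' v') <= Gamma Fs n.
Proof.
move=> e0 e1 h1 h2.
have hG : Gamma_edge Fs n u0 v0 <= Gamma Fs n.
  rewrite /Gamma; apply: (bigmax_ge _ _ (fun p => Gamma_edge Fs n p.1 p.2) (u0, v0)); exact: e0.
have hE := bigmax_ge _ (fun p : VV n.+1 * VV n.+1 => [&& E Fs n.+1 p.1 p.2, Ps n p.1 == u0 & Ps n p.2 == v0])
   (fun p => Rmax (Rabs (sn Fs n v0 u0 - sn Fs n.+1 p.2 p.1)) (Rabs (sn Fs n u0 v0 - sn Fs n.+1 p.1 p.2))) (u', v').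
have := hE ltac:(by rewrite /= e1 h1 h2 !eqxx).
rewrite /Gamma_edge /= => h.
split; apply: Rle_trans hG; apply: Rle_trans h; [apply: Rmax_l | apply: Rmax_r].
Qed.

Definition sa (x : XX) n := sn Fs n (pt x n) (pt (HX Fs x) n).
Definition sb (x : XX) n := sn Fs n (pt (HX Fs x) n) (pt x n).

Lemma sab_step x n : Rabs (sa x n - sa x n.+1) <= Gamma Fs n /\ Rabs (sb x n - sb x n.+1) <= Gamma Fs n.
Proof.
have := Gamma_step n (pt x n.+1) (pt (HX Fs x) n.+1) (pt x n.+1) (pt (HX Fs x) n.+1)
  (pt x n) (pt (HX Fs x) n) (HX_spec x n) (HX_spec x n.+1) (esym (pt_Psi _ _)) (esym (pt_Psi _ _)).
rewrite /sa /sb; tauto.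
Qed.

Fixpoint CG n := match n with 0%N => 0 | S n => CG n + Gamma Fs n end.

Lemma CG_S n : CG n.+1 = sum_f_R0 (Gamma Fs) n.
Proof. elim: n => [|n IH] /=; first lra. by rewrite -IH. Qed.

Lemma CG_cv : Un_cv CG lG.
Proof.
move=> eps he; have [N hN] := hGs eps he; exists N.+1 => [[|n]] hn; first by inversion hn.
rewrite CG_S; apply: hN; apply/leP; move/leP: hn; by [].
Qed.

Lemma CG_mono n m : (n <= m)%N -> CG n <= CG m.
Proof.
elim: m => [|m IH] h.
  by move: h; rewrite leqn0 => /eqP ->; lra.
move: h; rewrite leq_eqVlt => /orP [/eqP -> |h]; first lra.
have := IH h; have := Gamma_ge0 m; simpl; lra.
Qed.

Lemma CG_le n : CG n <= lG.
Proof. apply: (cv_ge _ _ _ n CG_cv) => k hk; exact: CG_mono. Qed.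

Lemma CG_ge0 n : 0 <= CG n.
Proof. have := CG_mono 0 n (leq0n n); simpl; lra. Qed.

Lemma tele_bound (u : nat -> R) : (forall n, Rabs (u n - u n.+1) <= Gamma Fs n) ->
  forall n m, (n <= m)%N -> Rabs (u n - u m) <= CG m - CG n.
Proof.
move=> hu n; elim=> [|m IH] h.
  move: h; rewrite leqn0 => /eqP ->; rewrite Rminus_diag Rabs_R0; lra.
move: h; rewrite leq_eqVlt => /orP [/eqP -> |h]; first by rewrite Rminus_diag Rabs_R0; lra.
have := IH h; have := hu m; simpl.
have := Rabs_triang (u n - u m) (u m - u m.+1).
have -> : u n - u m + (u m - u m.+1) = u n - u m.+1 by ring.
lra.
Qed.

Lemma tele_cv (u : nat -> R) : (forall n, Rabs (u n - u n.+1) <= Gamma Fs n) ->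
  Un_cv u (lim_seq u) /\ forall n, Rabs (lim_seq u - u n) <= lG - CG n.
Proof.
move=> hu.
have hC := CV_Cauchy CG (exist _ lG CG_cv).
have [s hs] : {s | Un_cv u s}.
  apply: R_complete => eps he; have [N hN] := hC eps he; exists N => n m hn hm.
  have := hN n m hn hm; rewrite /Rdist.
  case/orP: (leq_total n m) => h.
    have := tele_bound u hu n m h; rewrite (Rabs_minus_sym (CG n)).
    have := Rle_abs (CG m - CG n); lra.
  have := tele_bound u hu m n h; rewrite (Rabs_minus_sym (u n)).
  have := Rle_abs (CG n - CG m); lra.
rewrite (lim_seq_eq u s hs); split=> // n; apply: Rabs_le; split.
  have : u n - (lG - CG n) <= s; last lra.
  apply: (cv_ge _ _ _ n hs) => k hk; have := tele_bound u hu n k hk; have := CG_le k.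
  have := Rle_abs (u n - u k); lra.
have : s <= u n + (lG - CG n); last lra.
apply: (cv_le _ _ _ n hs) => k hk; have := tele_bound u hu n k hk; have := CG_le k.
rewrite Rabs_minus_sym; have := Rle_abs (u k - u n); lra.
Qed.

Lemma sX_cv x : Un_cv (sa x) (sX Fs x) /\ forall n, Rabs (sX Fs x - sa x n) <= lG - CG n.
Proof. exact: (tele_cv (sa x) (fun n => proj1 (sab_step x n))). Qed.

Lemma sa_pos x n : 0 < sa x n.
Proof. rewrite /sa /sn; apply: Rdiv_lt_0_compat; exact: hpos. Qed.

Lemma sb_pos x n : 0 < sb x n.
Proof. rewrite /sb /sn; apply: Rdiv_lt_0_compat; exact: hpos. Qed.

Lemma sa_lb x n : / (sb x 0 + 1) <= sa x n.
Proof.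
have hb : sb x n <= sb x 0 + 1.
  have := tele_bound (sb x) (fun n => proj2 (sab_step x n)) 0 n (leq0n n).
  have := CG_le n; have := Rle_abs (sb x n - sb x 0); rewrite (Rabs_minus_sym (sb x 0)).
  have e0 : CG 0 = 0 by []. lra.
have -> : sa x n = / sb x n.
  rewrite /sa /sb /sn; have := hpos _ (pt x n); have := hpos _ (pt (HX Fs x) n) => h1 h2.
  field; lra.
apply: Rinv_le_contravar => //; exact: sb_pos.
Qed.

Lemma sX_pos x : 0 < sX Fs x.
Proof.
have h0 : 0 < / (sb x 0 + 1) by apply: Rinv_0_lt_compat; have := sb_pos x 0; lra.
apply: Rlt_le_trans h0 _; apply: (cv_ge _ _ _ 0 (proj1 (sX_cv x))) => k _; exact: sa_lb.
Qed.

Lemma sX_cont eps : 0 < eps -> exists N, forall x y : XX, pt x N = pt y N ->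
  Rabs (sX Fs x - sX Fs y) < eps.
Proof.
move=> he; have [n hn] := CG_cv (eps / 2) ltac:(lra).
have hn' := hn n (le_n n); rewrite /Rdist in hn'.
have := CG_le n => hle.
have [N1 hN1] := HX_cont n.
exists (maxn N1 n) => x y e.
have e1 : pt (HX Fs x) n = pt (HX Fs y) n by apply: hN1; exact: agree_le (leq_maxl _ _) e.
have e2 : pt x n = pt y n by exact: agree_le (leq_maxr _ _) e.
have ea : sa x n = sa y n by rewrite /sa e1 e2.
have := proj2 (sX_cv x) n; have := proj2 (sX_cv y) n; rewrite ea => h1 h2.
have := Rabs_triang (sX Fs x - sa y n) (sa y n - sX Fs y).
have -> : sX Fs x - sa y n + (sa y n - sX Fs y) = sX Fs x - sX Fs y by ring.
rewrite (Rabs_minus_sym (sa y n)).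
move: hn'; rewrite Rabs_minus_sym Rabs_pos_eq; lra.
Qed.

Lemma phiUX_HX x : phiUX Fs (HX Fs x) = sX Fs x * phiUX Fs x.
Proof.
apply: UL_sequence (phiUX_cv (HX Fs x)) _.
apply: cv_ext (CV_mult _ _ _ _ (proj1 (sX_cv x)) (phiUX_cv x)) => n.
rewrite /sa /uU /sn; have := hpos _ (pt x n); move=> h; field; lra.
Qed.


Hypothesis hdense : forall (p : Fence Fs) eps, 0 < eps ->
      exists x : XX, dXR Fs (proj1_sig p) (x, phiUX Fs x) < eps.

Lemma dense' x t : phiLX Fs x <= t <= phiUX Fs x -> forall eps, 0 < eps ->
  exists x', dX Fs x x' < eps /\ Rabs (t - phiUX Fs x') < eps.
Proof.
move=> h eps he; have [x' hx'] := hdense (exist _ (x, t) h) eps he.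
exists x'; move: hx'; rewrite /dXR /=; have := Rmax_l (dX Fs x x') (Rabs (t - phiUX Fs x')).
have := Rmax_r (dX Fs x x') (Rabs (t - phiUX Fs x')); lra.
Qed.

Lemma L1 x : phiLX Fs (HX Fs x) <= sX Fs x * phiLX Fs x.
Proof.
apply: (cv_le _ _ _ 0 (phiLX_cv (HX Fs x))) => k _.
have hs0 := sX_pos x.
apply: (le_eps _ _ (sX Fs x + 2)); first lra.
move=> e he he1.
have [N1 hN1] := HX_cont k.
have [N2 hN2] := sX_cont e he.
pose N := maxn N1 N2.
have hmin : 0 < Rmin ((/2)^N) e by apply: Rmin_glb_lt => //; exact: half_pos.
have [x' [hd ht]] := dense' x (phiLX Fs x) (conj (Rle_refl _) (phiLU x)) _ hmin.
have hag : pt x N = pt x' N by apply: dX_lt_agree; apply: Rlt_le_trans hd (Rmin_l _ _).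
have e1 : pt (HX Fs x) k = pt (HX Fs x') k by apply: hN1; exact: agree_le (leq_maxl _ _) hag.
have hs := hN2 x x' (agree_le (leq_maxr _ _) hag).
have ht' : Rabs (phiLX Fs x - phiUX Fs x') < e by apply: Rlt_le_trans ht (Rmin_r _ _).
have h1 : uL (HX Fs x) k <= sX Fs x' * phiUX Fs x'.
  rewrite /uL e1 -phiUX_HX; apply: Rle_trans (phiLX_ge _ k) (phiLU _).
move/Rabs_def2: hs => hs; move/Rabs_def2: ht' => ht'.
have h2 := phiUX_ge0 x'; have h3 := sX_pos x'; have h4 := phiLX_le1 x; have h5 := phiLX_ge0 x.
have : sX Fs x' * phiUX Fs x' <= (sX Fs x + e) * (phiLX Fs x + e).
  apply: Rmult_le_compat; lra.
nra.
Qed.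

Lemma T_mem (p : Fence Fs) :
  phiLX Fs (HX Fs (proj1_sig p).1) <= sX Fs (proj1_sig p).1 * (proj1_sig p).2 <= phiUX Fs (HX Fs (proj1_sig p).1).
Proof.
destruct p as [[x t] [h1 h2]] => /=; simpl in h1, h2; have hs := sX_pos x; split.
  apply: Rle_trans (L1 x) _; apply: Rmult_le_compat_l; lra.
rewrite phiUX_HX; apply: Rmult_le_compat_l; lra.
Qed.

Definition Tf (p : Fence Fs) : Fence Fs :=
  exist _ (HX Fs (proj1_sig p).1, sX Fs (proj1_sig p).1 * (proj1_sig p).2) (T_mem p).

Lemma fence_t01 (p : Fence Fs) : 0 <= (proj1_sig p).2 <= 1.
Proof.
destruct p as [[x t] [h1 h2]] => /=; simpl in h1, h2; have := phiLX_ge0 x; have := phiUX_le1 x; lra.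
Qed.

Lemma T_cont : mcontinuous (dF Fs) (dF Fs) Tf.
Proof.
move=> [[x t] hp] eps he.
have [n hn] := half_small eps he.
have [N1 hN1] := HX_cont n.
have [N2 hN2] := sX_cont (eps / 2) ltac:(lra).
pose N := maxn N1 N2.
have hs := sX_pos x.
pose del := Rmin ((/2)^N) (eps / (2 * (sX Fs x + 1))).
have hdel1 : 0 < eps / (2 * (sX Fs x + 1)) by apply: Rdiv_lt_0_compat; lra.
exists del; split; first by apply: Rmin_glb_lt => //; exact: half_pos.
move=> [[y t'] hq]; rewrite /dF /dXR /= => hd.
have hd1 : dX Fs x y < (/2)^N.
  apply: Rle_lt_trans (Rmax_l _ _) _; apply: Rlt_le_trans hd (Rmin_l _ _).
have hd2 : Rabs (t - t') < eps / (2 * (sX Fs x + 1)).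
  apply: Rle_lt_trans (Rmax_r _ _) _; apply: Rlt_le_trans hd (Rmin_r _ _).
have hag := dX_lt_agree _ _ _ hd1.
apply: Rmax_lub_lt.
  apply: Rle_lt_trans hn; apply: Rle_trans (dX_agree _ _ n _) _.
    apply: hN1; exact: agree_le (leq_maxl _ _) hag.
  apply: half_le; exact: leqnSn.
have hss := hN2 x y (agree_le (leq_maxr _ _) hag).
have ht' := fence_t01 (exist _ (y, t') hq); simpl in ht'.
have -> : sX Fs x * t - sX Fs y * t' = sX Fs x * (t - t') + (sX Fs x - sX Fs y) * t' by ring.
apply: Rle_lt_trans (Rabs_triang _ _) _.
rewrite !Rabs_mult (Rabs_pos_eq (sX Fs x)); last lra.
rewrite (Rabs_pos_eq t'); last lra.
have : Rabs (t - t') * (2 * (sX Fs x + 1)) < eps.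
  move: hd2; rewrite /Rdiv => hd2.
  have := Rmult_lt_compat_r (2 * (sX Fs x + 1)) _ _ ltac:(lra) hd2.
  rewrite Rmult_assoc Rinv_l; lra.
have := Rabs_pos (t - t'); have := Rabs_pos (sX Fs x - sX Fs y).
nra.
Qed.


Lemma gp_mem x : phiLX Fs (x, phiUX Fs x).1 <= (x, phiUX Fs x).2 <= phiUX Fs (x, phiUX Fs x).1.
Proof. simpl; split; [exact: phiLU | exact: Rle_refl]. Qed.

Definition gp x : Fence Fs := exist _ (x, phiUX Fs x) (gp_mem x).

Lemma T_surj (q : Fence Fs) : exists p, Tf p = q.
Proof.
destruct q as [[y t] hq]; have hq' := hq; simpl in hq'.
pose P := fun n v => exists x' : XX, pt x' n = v /\ pt (HX Fs x') n = pt y n /\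
    sX Fs x' * phiL Fs n v <= t + (/2)^n.
have [x hx] : exists x : XX, forall n, P n (pt x n).
  apply: (konig P) => [n|n v [x' [e1 [e2 e3]]]].
    have [y' [hd ht]] := dense' y t hq' _ (half_pos n).
    have [x' hx'] := HX_surj y'.
    exists (pt x' n), x'; split=> //; split; first by rewrite hx'; apply: esym; exact: dX_lt_agree.
    have := phiLX_ge x' n; have := phiLU x'; have := sX_pos x'; rewrite /uL => h1 h2 h3.
    have : sX Fs x' * phiUX Fs x' <= t + (/2)^n.
      rewrite -phiUX_HX hx'; move/Rabs_def2: ht; lra.
    have : sX Fs x' * phiL Fs n (pt x' n) <= sX Fs x' * phiUX Fs x'.
      apply: Rmult_le_compat_l; lra.
    lra.
  exists x'; split; first by rewrite pt_Psi e1.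
  split; first by apply: agree_le e2; exact: leqnSn.
  have := hL n v; have := sX_pos x'; have := half_le (leqnSn n) => h1 h2 h3.
  have : sX Fs x' * phiL Fs n (Ps n v) <= sX Fs x' * phiL Fs n.+1 v by apply: Rmult_le_compat_l; lra.
  lra.
have hHx : HX Fs x = y.
  apply: X_ext => m; have [N hN] := HX_cont m.
  have [x' [e1 [e2 _]]] := hx (maxn N m).
  rewrite (hN x x'); last by apply: agree_le (leq_maxl _ _) (esym e1).
  exact: agree_le (leq_maxr _ _) e2.
have hsx := sX_pos x.
have hlow : sX Fs x * phiLX Fs x <= t.
  have : phiLX Fs x <= t / sX Fs x; last first.
    move=> h; have := Rmult_le_compat_l _ _ _ (Rlt_le _ _ hsx) h.
    have -> : sX Fs x * (t / sX Fs x) = t by field; lra.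
    done.
  apply: (cv_le _ _ _ 0 (phiLX_cv x)) => k _.
  suff : sX Fs x * uL x k <= t.
    move=> h; apply: (Rmult_le_reg_l (sX Fs x)) => //.
    have -> : sX Fs x * (t / sX Fs x) = t by field; lra.
    done.
  apply: (le_eps _ _ 2); first lra.
  move=> e he he1.
  have [N2 hN2] := sX_cont e he.
  have [n0 hn0] := half_small e he.
  pose n := maxn k (maxn N2 n0).
  have [x' [e1 [e2 e3]]] := hx n.
  have hkn : (k <= n)%N by apply: leq_maxl.
  have hN2n : (N2 <= n)%N by apply: leq_trans (leq_maxr _ _); apply: leq_maxl.
  have hn0n : (n0 <= n)%N by apply: leq_trans (leq_maxr _ _); apply: leq_maxr.
  have hss := hN2 x x' (agree_le hN2n (esym e1)).
  have := uL_mono x _ _ hkn; have := half_le hn0n.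
  have := hphi _ (pt x n); have := hphi _ (pt x k); have := sX_pos x'.
  move/Rabs_def2: hss; rewrite /uL => hss h1 h2 h3 h4 h5.
  have : sX Fs x * phiL Fs k (pt x k) <= (sX Fs x' + e) * phiL Fs n (pt x n).
    apply: Rmult_le_compat; lra.
  nra.
have hmem : phiLX Fs (x, t / sX Fs x).1 <= (x, t / sX Fs x).2 <= phiUX Fs (x, t / sX Fs x).1.
  simpl; split.
    apply: (Rmult_le_reg_l (sX Fs x)) => //.
    have -> : sX Fs x * (t / sX Fs x) = t by field; lra.
    done.
  apply: (Rmult_le_reg_l (sX Fs x)) => //.
  have -> : sX Fs x * (t / sX Fs x) = t by field; lra.
  rewrite -phiUX_HX hHx; lra.
exists (exist (fun p : XX * R => phiLX Fs p.1 <= p.2 <= phiUX Fs p.1) (x, t / sX Fs x) hmem); apply: sig_ext => /=; rewrite hHx; f_equal; field; lra.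
Qed.

Lemma T_graph (p : Fence Fs) : (proj1_sig p).2 = phiUX Fs (proj1_sig p).1 ->
  proj1_sig (Tf p) = (HX Fs (proj1_sig p).1, phiUX Fs (HX Fs (proj1_sig p).1)).
Proof. move=> e; rewrite /Tf /= e phiUX_HX; done. Qed.

Lemma T_uniq (T' : Fence Fs -> Fence Fs) :
  mcontinuous (dF Fs) (dF Fs) T' ->
  (forall p, (proj1_sig (T' p)).1 = HX Fs (proj1_sig p).1) ->
  (forall p, (proj1_sig p).2 = phiUX Fs (proj1_sig p).1 ->
     proj1_sig (T' p) = (HX Fs (proj1_sig p).1, phiUX Fs (HX Fs (proj1_sig p).1))) ->
  forall p, T' p = Tf p.
Proof.
move=> hc hf hg p; apply: sig_ext; apply: injective_projections; first by rewrite hf.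
apply: eq_eps => e he.
have [d1 [hd1 h1]] := hc p (e / 2) ltac:(lra).
have [d2 [hd2 h2]] := T_cont p (e / 2) ltac:(lra).
have hmin : 0 < Rmin d1 d2 by apply: Rmin_glb_lt.
have [x' hx'] := hdense p _ hmin.
have hq1 : dF Fs p (gp x') < d1 by apply: Rlt_le_trans hx' (Rmin_l _ _).
have hq2 : dF Fs p (gp x') < d2 by apply: Rlt_le_trans hx' (Rmin_r _ _).
have := h1 _ hq1; have := h2 _ hq2; rewrite /dF /dXR.
have e1 : (proj1_sig (T' (gp x'))).2 = (proj1_sig (Tf (gp x'))).2.
  by rewrite (hg (gp x') erefl) (T_graph (gp x') erefl).
rewrite e1.
set a := (proj1_sig (T' p)).2; set b := (proj1_sig (Tf p)).2; set c := (proj1_sig (Tf (gp x'))).2.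
move=> k1 k2.
have k1' := Rle_lt_trans _ _ _ (Rmax_r _ _) k1.
have k2' := Rle_lt_trans _ _ _ (Rmax_r _ _) k2.
have := Rabs_triang (a - c) (c - b).
have -> : a - c + (c - b) = a - b by ring.
rewrite (Rabs_minus_sym c b); lra.
Qed.


Section Homeo.
Variable g : XX -> XX.
Hypothesis hg1 : forall x, g (HX Fs x) = x.
Hypothesis hg2 : forall y, HX Fs (g y) = y.
Hypothesis hgc : mcontinuous (dX Fs) (dX Fs) g.

Lemma L2 x : sX Fs x * phiLX Fs x <= phiLX Fs (HX Fs x).
Proof.
have hsx := sX_pos x.
suff : phiLX Fs x <= phiLX Fs (HX Fs x) / sX Fs x.
  move=> h; have := Rmult_le_compat_l _ _ _ (Rlt_le _ _ hsx) h.
  have -> : sX Fs x * (phiLX Fs (HX Fs x) / sX Fs x) = phiLX Fs (HX Fs x) by field; lra.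
  done.
apply: (cv_le _ _ _ 0 (phiLX_cv x)) => k _.
suff : sX Fs x * uL x k <= phiLX Fs (HX Fs x).
  move=> h; apply: (Rmult_le_reg_l (sX Fs x)) => //.
  have -> : sX Fs x * (phiLX Fs (HX Fs x) / sX Fs x) = phiLX Fs (HX Fs x) by field; lra.
  done.
apply: (le_eps _ _ 3); first lra.
move=> e he he1.
have [N2 hN2] := sX_cont e he.
pose N := maxn k N2.
have [del [hdel hgd]] := hgc (HX Fs x) ((/2)^N) (half_pos N).
have hmin : 0 < Rmin del e by apply: Rmin_glb_lt.
have [y' [hd ht]] := dense' (HX Fs x) (phiLX Fs (HX Fs x)) (conj (Rle_refl _) (phiLU _)) _ hmin.
have hxx := hgd y' (Rlt_le_trans _ _ _ hd (Rmin_l _ _)).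
rewrite hg1 in hxx.
have hag := dX_lt_agree _ _ _ hxx.
have ek : uL x k = uL (g y') k by rewrite /uL (agree_le (leq_maxl _ _) hag).
have hss := hN2 x (g y') (agree_le (leq_maxr _ _) hag).
have h1 : uL (g y') k <= phiUX Fs (g y') := Rle_trans _ _ _ (phiLX_ge _ k) (phiLU _).
have h2 : sX Fs (g y') * phiUX Fs (g y') <= phiLX Fs (HX Fs x) + e.
  rewrite -phiUX_HX hg2; have := Rlt_le_trans _ _ _ ht (Rmin_r _ _); move/Rabs_def2; lra.
have := hphi _ (pt x k); have := sX_pos (g y'); rewrite ek; move/Rabs_def2: hss.
rewrite /uL in h1 ek |- * => hss h3 h4.
have : sX Fs x * phiL Fs k (pt (g y') k) <= (sX Fs (g y') + e) * phiL Fs k (pt (g y') k).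
  apply: Rmult_le_compat_r; lra.
have : sX Fs (g y') * phiL Fs k (pt (g y') k) <= sX Fs (g y') * phiUX Fs (g y').
  apply: Rmult_le_compat_l; lra.
have := hphi _ (pt (g y') k).
nra.
Qed.

Lemma Ti_mem (q : Fence Fs) :
  phiLX Fs (g (proj1_sig q).1, (proj1_sig q).2 / sX Fs (g (proj1_sig q).1)).1 <=
  (g (proj1_sig q).1, (proj1_sig q).2 / sX Fs (g (proj1_sig q).1)).2 <=
  phiUX Fs (g (proj1_sig q).1, (proj1_sig q).2 / sX Fs (g (proj1_sig q).1)).1.
Proof.
destruct q as [[y t] [h1 h2]]; simpl in h1, h2 |- *.
have hs := sX_pos (g y).
have L := L2 (g y); rewrite hg2 in L.
have P := phiUX_HX (g y); rewrite hg2 in P.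
split; apply: (Rmult_le_reg_l (sX Fs (g y))) => //;
  (have -> : sX Fs (g y) * (t / sX Fs (g y)) = t by field; lra); lra.
Qed.

Definition Ti (q : Fence Fs) : Fence Fs :=
  exist (fun p : XX * R => phiLX Fs p.1 <= p.2 <= phiUX Fs p.1) _ (Ti_mem q).

Lemma Ti_cont : mcontinuous (dF Fs) (dF Fs) Ti.
Proof.
move=> [[y t] hq] eps he.
set a := sX Fs (g y).
have ha : 0 < a := sX_pos (g y).
have heta : 0 < Rmin (a/2) (eps*a*a/4).
  apply: Rmin_glb_lt; first lra.
  have : 0 < eps * a by apply: Rmult_lt_0_compat.
  nra.
have [N hN] := sX_cont _ heta.
have [n hn] := half_small eps he.
pose m := maxn n N.
have [d1 [hd1 hgd]] := hgc y ((/2)^m) (half_pos m).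
have hea : 0 < eps * a / 2 by have := Rmult_lt_0_compat _ _ he ha; lra.
exists (Rmin d1 (eps * a / 2)); split; first by apply: Rmin_glb_lt.
move=> [[y' t'] hq']; rewrite /dF /dXR /= => hd.
have hdy : dX Fs y y' < d1.
  apply: Rle_lt_trans (Rmax_l _ _) _; apply: Rlt_le_trans hd (Rmin_l _ _).
have htt : Rabs (t - t') < eps * a / 2.
  apply: Rle_lt_trans (Rmax_r _ _) _; apply: Rlt_le_trans hd (Rmin_r _ _).
have hgg := hgd y' hdy.
have hag := dX_lt_agree _ _ _ hgg.
have ht' := fence_t01 (exist _ (y', t') hq'); simpl in ht'.
apply: Rmax_lub_lt.
  apply: Rlt_le_trans hgg _; apply: Rle_trans (half_le (leq_maxl n N)) _; lra.
apply: div_close => //.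
exact: hN (agree_le (leq_maxr _ _) hag).
Qed.

End Homeo.

Lemma T_homeo : homeomorphism (dX Fs) (HX Fs) -> homeomorphism (dF Fs) Tf.
Proof.
move=> [_ [g [hg1 hg2 hgc]]]; split; first exact: T_cont.
exists (Ti g hg1 hg2 hgc); split.
- move=> [[x t] hp]; apply: sig_ext; rewrite /= hg1; f_equal.
  have := sX_pos x; move=> h; field; lra.
- move=> [[y t] hp]; apply: sig_ext; rewrite /= hg2; f_equal.
  have := sX_pos (g y); move=> h; field; lra.
- exact: Ti_cont.
Qed.


Lemma s_bound Ks x0 : (forall a a', dR (sX Fs a) (sX Fs a') <= Ks * dX Fs a a') ->
  forall y, sX Fs y <= sX Fs x0 + Rabs Ks.
Proof.
move=> hKs y; have := hKs y x0; rewrite /dR => h.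
have := mulabs_le Ks (dX Fs y x0) 1 (conj (dX_ge0 _ _) (dX_le1 _ _)).
have := Rle_abs (sX Fs y - sX Fs x0); lra.
Qed.

Lemma si_bound Ki x0 : (forall a a', dR (/ sX Fs a) (/ sX Fs a') <= Ki * dX Fs a a') ->
  forall y, / sX Fs y <= / sX Fs x0 + Rabs Ki.
Proof.
move=> hKs y; have := hKs y x0; rewrite /dR => h.
have := mulabs_le Ki (dX Fs y x0) 1 (conj (dX_ge0 _ _) (dX_le1 _ _)).
have := Rle_abs (/ sX Fs y - / sX Fs x0); lra.
Qed.

Lemma T_upper Ks KH Ms (p q : Fence Fs) :
  (forall a a', dR (sX Fs a) (sX Fs a') <= Ks * dX Fs a a') ->
  (forall a a', dX Fs (HX Fs a) (HX Fs a') <= KH * dX Fs a a') ->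
  (forall y, sX Fs y <= Ms) ->
  dF Fs (Tf p) (Tf q) <= (Rabs KH + Rabs Ks + Ms) * dF Fs p q.
Proof.
move=> hKs hKH hMs.
have ht := fence_t01 q.
have htp := fence_t01 p.
destruct p as [[x t] hp], q as [[y t'] hq]; simpl in ht, htp.
rewrite /dF /dXR /=.
set D := Rmax (dX Fs x y) (Rabs (t - t')).
have hD1 : dX Fs x y <= D := Rmax_l _ _.
have hD2 : Rabs (t - t') <= D := Rmax_r _ _.
have hd0 := dX_ge0 x y.
have ha := Rabs_pos (t - t').
have hsy := sX_pos y.
have hsx := sX_pos x.
have hMs0 : 0 <= Ms by have := hMs y; lra.
have k1 := mulabs_le KH (dX Fs x y) D (conj hd0 hD1).
have k2 := mulabs_le Ks (dX Fs x y) D (conj hd0 hD1).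
have k3 := Rabs_pos KH; have k4 := Rabs_pos Ks.
apply: Rmax_lub.
  have := hKH x y; nra.
have -> : sX Fs x * t - sX Fs y * t' = (sX Fs x - sX Fs y) * t + sX Fs y * (t - t') by ring.
apply: Rle_trans (Rabs_triang _ _) _.
rewrite !Rabs_mult (Rabs_pos_eq t); last lra.
rewrite (Rabs_pos_eq (sX Fs y)); last lra.
have := hKs x y; rewrite /dR => k5.
have k6 : Rabs (sX Fs x - sX Fs y) * t <= Rabs (sX Fs x - sX Fs y).
  have := Rabs_pos (sX Fs x - sX Fs y); nra.
have k7 : sX Fs y * Rabs (t - t') <= Ms * D.
  apply: Rmult_le_compat => //; lra.
have hD0 : 0 <= D by lra.
nra.
Qed.

Lemma T_lip : lipschitz (dX Fs) dR (sX Fs) -> lipschitz (dX Fs) (dX Fs) (HX Fs) ->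
  lipschitz (dF Fs) (dF Fs) Tf.
Proof.
move=> [Ks hKs] [KH hKH].
case: (classic (exists x0 : XX, True)) => [[x0 _]|hne]; last first.
  exists 0 => p; exfalso; apply: hne; by exists (proj1_sig p).1.
exists (Rabs KH + Rabs Ks + (sX Fs x0 + Rabs Ks)) => p q.
exact: T_upper hKs hKH (s_bound Ks x0 hKs).
Qed.

Lemma T_bilip : lipschitz (dX Fs) dR (sX Fs) -> lipschitz (dX Fs) dR (fun x => / sX Fs x) ->
  bilipschitz (dX Fs) (dX Fs) (HX Fs) -> bilipschitz (dF Fs) (dF Fs) Tf.
Proof.
move=> [Ks hKs] [Ki hKi] [KH [hKH0 hKH]].
case: (classic (exists x0 : XX, True)) => [[x0 _]|hne]; last first.
  exists 1; split; first lra.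
  move=> p; exfalso; apply: hne; by exists (proj1_sig p).1.
pose Ms := sX Fs x0 + Rabs Ks.
pose Mi := / sX Fs x0 + Rabs Ki.
have hs0 := sX_pos x0.
have hMs0 : 0 < Ms by rewrite /Ms; have := Rabs_pos Ks; lra.
have hMi0 : 0 < Mi by rewrite /Mi; have := Rabs_pos Ki; have := Rinv_0_lt_compat _ hs0; lra.
have hKiH : 0 <= Rabs Ki * KH by apply: Rmult_le_pos; [exact: Rabs_pos| lra].
exists (KH + Rabs Ks + Ms + Mi + Rabs Ki * KH + 1); split.
  have := Rabs_pos Ks; lra.
move=> p q.
have hUH : forall a a', dX Fs (HX Fs a) (HX Fs a') <= KH * dX Fs a a' by move=> a a'; exact: (proj2 (hKH a a')).
have hup := T_upper Ks KH Ms p q hKs hUH (s_bound Ks x0 hKs).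
have hdF0 : 0 <= dF Fs p q by rewrite /dF /dXR; apply: Rle_trans (Rmax_l _ _); exact: dX_ge0.
have hdT0 : 0 <= dF Fs (Tf p) (Tf q) by rewrite /dF /dXR; apply: Rle_trans (Rmax_l _ _); exact: dX_ge0.
split; last first.
  apply: Rle_trans hup _; apply: Rmult_le_compat_r => //.
  rewrite (Rabs_pos_eq KH); last lra.
  have := Rabs_pos Ks; lra.
have hu' := fence_t01 (Tf q).
have hMi := si_bound Ki x0 hKi.
move: hdT0 hu'.
destruct p as [[x t] hp], q as [[y t'] hq].
rewrite /dF /dXR /= => hdT0 hu'.
set D' := Rmax (dX Fs (HX Fs x) (HX Fs y)) (Rabs (sX Fs x * t - sX Fs y * t')).
have hD1 : dX Fs (HX Fs x) (HX Fs y) <= D' := Rmax_l _ _.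
have hD2 : Rabs (sX Fs x * t - sX Fs y * t') <= D' := Rmax_r _ _.
have hxy : dX Fs x y <= KH * D'.
  apply: Rle_trans (proj1 (hKH x y)) _; apply: Rmult_le_compat_l; lra.
have hsx := sX_pos x; have hsy := sX_pos y.
have hix := Rinv_0_lt_compat _ hsx; have hiy := Rinv_0_lt_compat _ hsy.
have htt : Rabs (t - t') <= Mi * D' + Rabs Ki * KH * D'.
  have -> : t - t' = (sX Fs x * t - sX Fs y * t') * / sX Fs x + sX Fs y * t' * (/ sX Fs x - / sX Fs y).
    field; lra.
  apply: Rle_trans (Rabs_triang _ _) _.
  rewrite (Rabs_mult (sX Fs x * t - sX Fs y * t')) (Rabs_mult (sX Fs y * t')).
  rewrite (Rabs_pos_eq (/ sX Fs x)); last lra.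
  rewrite (Rabs_pos_eq (sX Fs y * t')); last lra.
  have k1 : Rabs (sX Fs x * t - sX Fs y * t') * / sX Fs x <= D' * Mi.
    apply: Rmult_le_compat; [exact: Rabs_pos| lra| exact: hD2| exact: hMi].
  have := hKi x y; rewrite /dR => k2.
  have k3 := mulabs_le Ki (dX Fs x y) (KH * D') (conj (dX_ge0 _ _) hxy).
  have k4 : sX Fs y * t' * Rabs (/ sX Fs x - / sX Fs y) <= Rabs (/ sX Fs x - / sX Fs y).
    have := Rabs_pos (/ sX Fs x - / sX Fs y); nra.
  nra.
apply: Rmax_lub.
  have : KH * D' <= (KH + Rabs Ks + Ms + Mi + Rabs Ki * KH + 1) * D'; last lra.
  apply: Rmult_le_compat_r => //; have := Rabs_pos Ks; lra.
apply: Rle_trans htt _.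
have hD0 : 0 <= D' by apply: Rle_trans (dX_ge0 _ _) hD1.
have : 0 <= (KH + Rabs Ks + Ms + 1) * D' by apply: Rmult_le_pos => //; have := Rabs_pos Ks; lra.
lra.
Qed.

Lemma T_iso : (forall x, sX Fs x = 1) -> isometry (dX Fs) (dX Fs) (HX Fs) ->
  isometry (dF Fs) (dF Fs) Tf.
Proof.
move=> h1 hi [[x t] hp] [[y t'] hq]; rewrite /dF /dXR /= !h1 hi !Rmult_1_l; done.
Qed.


Lemma main_sec : exists T : Fence Fs -> Fence Fs,
    mcontinuous (dF Fs) (dF Fs) T /\
    (forall q, exists p, T p = q) /\
    (forall p, (proj1_sig (T p)).1 = HX Fs (proj1_sig p).1) /\
    (forall p, (proj1_sig p).2 = phiUX Fs (proj1_sig p).1 ->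
       proj1_sig (T p) = (HX Fs (proj1_sig p).1, phiUX Fs (HX Fs (proj1_sig p).1))) /\
    (forall T' : Fence Fs -> Fence Fs,
       mcontinuous (dF Fs) (dF Fs) T' ->
       (forall q, exists p, T' p = q) ->
       (forall p, (proj1_sig (T' p)).1 = HX Fs (proj1_sig p).1) ->
       (forall p, (proj1_sig p).2 = phiUX Fs (proj1_sig p).1 ->
          proj1_sig (T' p) = (HX Fs (proj1_sig p).1, phiUX Fs (HX Fs (proj1_sig p).1))) ->
       forall p, T' p = T p) /\
    (homeomorphism (dX Fs) (HX Fs) -> homeomorphism (dF Fs) T) /\
    (lipschitz (dX Fs) dR (sX Fs) -> lipschitz (dX Fs) (dX Fs) (HX Fs) ->
       lipschitz (dF Fs) (dF Fs) T) /\
    (lipschitz (dX Fs) dR (sX Fs) -> lipschitz (dX Fs) dR (fun x => / sX Fs x) ->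
       bilipschitz (dX Fs) (dX Fs) (HX Fs) ->
       bilipschitz (dF Fs) (dF Fs) T) /\
    ((forall x, sX Fs x = 1) -> isometry (dX Fs) (dX Fs) (HX Fs) ->
       isometry (dF Fs) (dF Fs) T).
Proof.
exists Tf; split; first exact: T_cont.
split; first exact: T_surj.
split; first by [].
split; first exact: T_graph.
split; first by move=> T' hc _ hf hg p; exact: T_uniq.
split; first exact: T_homeo.
split; first exact: T_lip.
split; first exact: T_bilip.
exact: T_iso.
Qed.

End Sys.

Theorem theorem5p4 (Fs : FData) :
  is_FSystem Fs ->
  (forall n (v : V Fs n), 0 < phiU Fs n v) ->
  condition_Gamma Fs ->
  Scissorhand Fs ->
  exists T : Fence Fs -> Fence Fs,
    (* T is a continuous surjection *)
    mcontinuous (dF Fs) (dF Fs) T /\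
    (forall q, exists p, T p = q) /\
    (* H_X is a factor: pi o T = H_X o pi *)
    (forall p, (proj1_sig (T p)).1 = HX Fs (proj1_sig p).1) /\
    (* T(x, phi^U(x)) = (H_X(x), phi^U(H_X(x))) *)
    (forall p, (proj1_sig p).2 = phiUX Fs (proj1_sig p).1 ->
       proj1_sig (T p) = (HX Fs (proj1_sig p).1, phiUX Fs (HX Fs (proj1_sig p).1))) /\
    (* uniqueness *)
    (forall T' : Fence Fs -> Fence Fs,
       mcontinuous (dF Fs) (dF Fs) T' ->
       (forall q, exists p, T' p = q) ->
       (forall p, (proj1_sig (T' p)).1 = HX Fs (proj1_sig p).1) ->
       (forall p, (proj1_sig p).2 = phiUX Fs (proj1_sig p).1 ->
          proj1_sig (T' p) = (HX Fs (proj1_sig p).1, phiUX Fs (HX Fs (proj1_sig p).1))) ->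
       forall p, T' p = T p) /\
    (* (1) *)
    (homeomorphism (dX Fs) (HX Fs) -> homeomorphism (dF Fs) T) /\
    (* (2) *)
    (lipschitz (dX Fs) dR (sX Fs) -> lipschitz (dX Fs) (dX Fs) (HX Fs) ->
       lipschitz (dF Fs) (dF Fs) T) /\
    (* (3) *)
    (lipschitz (dX Fs) dR (sX Fs) -> lipschitz (dX Fs) dR (fun x => / sX Fs x) ->
       bilipschitz (dX Fs) (dX Fs) (HX Fs) ->
       bilipschitz (dF Fs) (dF Fs) T) /\
    (* (4) *)
    ((forall x, sX Fs x = 1) -> isometry (dX Fs) (dX Fs) (HX Fs) ->
       isometry (dF Fs) (dF Fs) T).
Proof.
move=> [hout [hin [_ [hedge [_ [_ [hii [hphi [hU [hL _]]]]]]]]]] hpos [lG [hGs hGl]] [hdense _].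
exact: (main_sec Fs hout hin hedge hii hphi hU hL hpos lG hGs hGl hdense).
Qed.
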